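(* There exists a countable family $\mathcal{F}$ of $1$-Lipschitz functions $2^\omega\to 2^\omega$ and an uncountable set $X\subseteq 2^\omega$ such that $X\times X$ is covered by $\mathcal{F}$.
   Context: $2^\omega$ is the Cantor set of all functions $\omega\to\{0,1\}$, equipped with the metric $d(x,y)=2^{-k}$ for $x\neq y$, where $k$ is the smallest natural number with $x\restriction k\neq y\restriction k$ (and $d(x,x)=0$). A function $f$ is $1$-Lipschitz if $d(f(x),f(y))\le d(x,y)$ for all $x,y$. A set $M\subseteq 2^\omega\times 2^\omega$ is covered by a family of functions $\mathcal{F}$ if for every $(x,y)\in M$ there is $f\in\mathcal{F}$ such that either $y=f(x)$ or $x=f(y)$. *)

(* Defs.v *)
From Stdlib Require Import Reals ClassicalEpsilon.
Open Scope R_scope.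

Definition cantor := nat -> bool.

Definition first_diff (x y : cantor) (n : nat) : Prop :=
  x n <> y n /\ forall m, (m < n)%nat -> x m = y m.

(* The metric: d(x,x) = 0, and for x <> y, d(x,y) = 2^{-k} where k is the
   smallest k with x|k <> y|k; that k equals (first differing index) + 1. *)
Definition cantor_dist (x y : cantor) : R :=
  match excluded_middle_informative (exists n, first_diff x y n) with
  | left H => / 2 ^ (S (proj1_sig (constructive_indefinite_description _ H)))
  | right _ => 0
  end.

Definition lipschitz1 (f : cantor -> cantor) : Prop :=
  forall x y, cantor_dist (f x) (f y) <= cantor_dist x y.

Definition covered_by {I : Type} (F : I -> cantor -> cantor)
  (M : cantor -> cantor -> Prop) : Prop :=
  forall x y, M x y -> exists i, y = F i x \/ x = F i y.

Definition countable_set (X : cantor -> Prop) : Prop :=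
  exists g : nat -> cantor, forall x, X x -> exists n, g n = x.

(* Main.v *)
Require Import Defs.
From Stdlib Require Import Reals ClassicalEpsilon Lia Lra Arith List.
From Stdlib Require Import FunctionalExtensionality PropExtensionality Classical.
Open Scope nat_scope.
Open Scope bool_scope.

Definition dec (P : Prop) : bool :=
  if excluded_middle_informative P then true else false.

Lemma dec_true (P : Prop) : dec P = true <-> P.
Proof. unfold dec; destruct (excluded_middle_informative P); split; intros; auto; try discriminate; contradiction. Qed.

Lemma dec_false (P : Prop) : dec P = false <-> ~ P.
Proof. unfold dec; destruct (excluded_middle_informative P); split; intros; auto; try discriminate; contradiction. Qed.

Lemma dec_ext (P Q : Prop) : (P <-> Q) -> dec P = dec Q.
Proof. intros H; unfold dec; destruct (excluded_middle_informative P), (excluded_middle_informative Q); tauto. Qed.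

Fixpoint cnt (P : nat -> Prop) (m : nat) : nat :=
  match m with 0 => 0 | S m' => cnt P m' + (if dec (P m') then 1 else 0) end.

Lemma cnt_le P m : cnt P m <= m.
Proof. induction m; simpl; [lia|destruct (dec (P m)); lia]. Qed.

Lemma cnt_mono (P Q : nat -> Prop) m : (forall b, b < m -> P b -> Q b) -> cnt P m <= cnt Q m.
Proof.
  induction m; simpl; intros H; [lia|].
  assert (IH := IHm (fun b Hb => H b ltac:(lia))).
  destruct (dec (P m)) eqn:E1, (dec (Q m)) eqn:E2; try lia.
  apply (proj1 (dec_true _)) in E1. apply (proj1 (dec_false _)) in E2. exfalso; apply E2, H; auto.
Qed.

Lemma cnt_ext (P Q : nat -> Prop) m : (forall b, b < m -> (P b <-> Q b)) -> cnt P m = cnt Q m.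
Proof.
  intros H; apply Nat.le_antisymm; apply cnt_mono; intros b Hb; apply H; auto.
Qed.

Lemma cnt_strict (P Q : nat -> Prop) m c : (forall b, b < m -> P b -> Q b) -> c < m -> Q c -> ~ P c -> cnt P m < cnt Q m.
Proof.
  induction m; simpl; intros H Hc HQ HP; [lia|].
  destruct (Nat.eq_dec c m) as [->|Hne].
  - assert (cnt P m <= cnt Q m) by (apply cnt_mono; intros; apply H; auto).
    rewrite (proj2 (dec_false _) HP), (proj2 (dec_true _) HQ). lia.
  - assert (cnt P m < cnt Q m) by (apply IHm; auto; try lia; intros; apply H; auto).
    destruct (dec (P m)) eqn:E1, (dec (Q m)) eqn:E2; try lia.
    apply (proj1 (dec_true _)) in E1. apply (proj1 (dec_false _)) in E2. exfalso; apply E2, H; auto.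
Qed.

Fixpoint lst (P : nat -> Prop) (m : nat) : list nat :=
  match m with 0 => nil | S m' => lst P m' ++ (if dec (P m') then m' :: nil else nil) end.

Lemma lst_len P m : length (lst P m) = cnt P m.
Proof. induction m; simpl; auto. rewrite length_app, IHm. destruct (dec (P m)); simpl; auto. Qed.

Lemma lst_in P m b : In b (lst P m) <-> b < m /\ P b.
Proof.
  induction m; simpl.
  - split; [tauto| lia].
  - rewrite in_app_iff, IHm. destruct (dec (P m)) eqn:E; simpl.
    + apply (proj1 (dec_true _)) in E. split.
      * intros [[? ?]|[<-|[]]]; split; auto; lia.
      * intros [Hb HP]. destruct (Nat.eq_dec b m); [right; left; auto| left; split; auto; lia].
    + apply (proj1 (dec_false _)) in E. split.
      * intros [[? ?]|[]]; split; auto; lia.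
      * intros [Hb HP]. left. split; auto. destruct (Nat.eq_dec b m); [subst; contradiction| lia].
Qed.

Lemma lst_nodup P m : NoDup (lst P m).
Proof.
  induction m; simpl; [constructor|].
  destruct (dec (P m)); simpl; [|rewrite app_nil_r; auto].
  apply NoDup_app; auto.
  - repeat constructor; simpl; tauto.
  - intros x Hx Hx2. apply lst_in in Hx. destruct Hx2 as [<-|[]]. lia.
Qed.

Lemma NoDup_map_inj {A B} (f : A -> B) (l : list A) :
  NoDup l -> (forall x y, In x l -> In y l -> f x = f y -> x = y) -> NoDup (map f l).
Proof.
  induction l; simpl; intros Hn Hi; constructor.
  - inversion Hn; subst. intros Hin. apply in_map_iff in Hin as [y [Hy Hyl]].
    assert (y = a) by (apply Hi; auto). subst; contradiction.
  - inversion Hn; subst. apply IHl; auto.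
Qed.

Lemma cnt_bij (P Q : nat -> Prop) (f : nat -> nat) m :
  (forall a, a < m -> P a -> f a < m /\ Q (f a)) ->
  (forall a1 a2, a1 < m -> a2 < m -> P a1 -> P a2 -> f a1 = f a2 -> a1 = a2) ->
  (forall b, b < m -> Q b -> exists a, a < m /\ P a /\ f a = b) ->
  cnt P m = cnt Q m.
Proof.
  intros H1 H2 H3. rewrite <- !lst_len.
  apply Nat.le_antisymm.
  - rewrite <- (length_map f).
    apply NoDup_incl_length.
    + apply NoDup_map_inj; [apply lst_nodup|].
      intros x y Hx Hy; apply lst_in in Hx, Hy; apply H2; tauto.
    + intros b Hb. apply in_map_iff in Hb as [a [<- Ha]]. apply lst_in in Ha.
      apply lst_in. apply H1; tauto.
  - rewrite <- (length_map f (lst P m)).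
    apply NoDup_incl_length; [apply lst_nodup|].
    intros b Hb. apply lst_in in Hb. destruct (H3 b (proj1 Hb) (proj2 Hb)) as [a [? [? ?]]].
    apply in_map_iff. exists a; split; auto. apply lst_in; auto.
Qed.

Fixpoint tri (m : nat) : nat := match m with 0 => 0 | S m' => tri m' + S m' end.
Definition bpos (m k : nat) : nat := tri m + k.

Lemma tri_mono m m' : m <= m' -> tri m <= tri m'.
Proof. induction 1; simpl; lia. Qed.

Lemma pos_lt_tri m k : k <= m -> bpos m k < tri (S m).
Proof. unfold bpos; simpl; lia. Qed.

Fixpoint unpair (p : nat) : nat * nat :=
  match p with
  | 0 => (0, 0)
  | S p' => let (m, k) := unpair p' in if k =? m then (S m, 0) else (m, S k)
  end.

Lemma unpair_spec p : snd (unpair p) <= fst (unpair p) /\ bpos (fst (unpair p)) (snd (unpair p)) = p.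
Proof.
  induction p; simpl; [unfold bpos; simpl; lia|].
  destruct (unpair p) as [m k]; simpl in *.
  destruct (Nat.eqb_spec k m); simpl; unfold bpos in *; simpl; lia.
Qed.

Lemma pos_inj m k m' k' : k <= m -> k' <= m' -> bpos m k = bpos m' k' -> m = m' /\ k = k'.
Proof.
  intros H1 H2 E.
  destruct (Nat.lt_trichotomy m m') as [Hl|[->|Hl]].
  - assert (bpos m k < tri (S m)) by (apply pos_lt_tri; auto).
    assert (tri (S m) <= tri m') by (apply tri_mono; lia).
    unfold bpos in *. lia.
  - unfold bpos in E; split; auto; lia.
  - assert (bpos m' k' < tri (S m')) by (apply pos_lt_tri; auto).
    assert (tri (S m') <= tri m) by (apply tri_mono; lia).
    unfold bpos in *. lia.
Qed.

Lemma unpair_pos m k : k <= m -> unpair (bpos m k) = (m, k).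
Proof.
  intros H. destruct (unpair_spec (bpos m k)) as [H1 H2].
  destruct (pos_inj _ _ _ _ H1 H H2) as [E1 E2].
  destruct (unpair (bpos m k)); simpl in *; subst; auto.
Qed.

Definition pr (i : nat) : nat * nat := let (m, k) := unpair i in (m - k, k).

Lemma pr_surj a b : exists i, pr i = (a, b).
Proof.
  exists (bpos (a + b) b). unfold pr. rewrite unpair_pos by lia. f_equal; lia.
Qed.

Fixpoint bitof (H p : nat) : bool :=
  match p with 0 => Nat.odd H | S p' => bitof (Nat.div2 H) p' end.

Fixpoint code (f : nat -> bool) (M : nat) : nat :=
  match M with 0 => 0 | S M' => (if f 0 then 1 else 0) + 2 * code (fun p => f (S p)) M' end.

Lemma code_spec M : forall f p, p < M -> bitof (code f M) p = f p.
Proof.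
  induction M; intros f p Hp; [lia|].
  destruct p.
  - cbn [bitof code]. rewrite Nat.odd_add_mul_2. destruct (f 0); reflexivity.
  - cbn [bitof code]. replace (Nat.div2 ((if f 0 then 1 else 0) + 2 * code (fun p0 : nat => f (S p0)) M))
      with (code (fun p0 : nat => f (S p0)) M).
    + apply (IHM (fun p0 => f (S p0))). lia.
    + destruct (f 0).
      * replace (1 + 2 * code (fun p0 : nat => f (S p0)) M) with (S (2 * code (fun p0 : nat => f (S p0)) M)) by lia.
        rewrite Nat.div2_succ_double. auto.
      * rewrite Nat.add_0_l, Nat.div2_double. auto.
Qed.

Lemma first_diff_unique x y n1 n2 : first_diff x y n1 -> first_diff x y n2 -> n1 = n2.
Proof.
  intros [H1 H1'] [H2 H2'].
  destruct (Nat.lt_trichotomy n1 n2) as [Hl|[?|Hl]]; auto.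
  - exfalso; apply H1, H2'; auto.
  - exfalso; apply H2, H1'; auto.
Qed.

Lemma first_diff_exists x y M : (exists q, q <= M /\ x q <> y q) -> exists n, n <= M /\ first_diff x y n.
Proof.
  induction M; intros [q [Hq Hd]].
  - exists 0; split; auto. assert (q = 0) by lia; subst. split; auto. intros; lia.
  - destruct (classic (exists q, q <= M /\ x q <> y q)) as [Hq'|Hq'].
    + destruct (IHM Hq') as [n [? ?]]; exists n; split; auto.
    + exists (S M); split; auto. split.
      * destruct (Nat.eq_dec q (S M)) as [->|]; auto. exfalso; apply Hq'; exists q; split; auto; lia.
      * intros m Hm. destruct (Bool.bool_dec (x m) (y m)); auto. exfalso; apply Hq'; exists m; split; auto; lia.
Qed.

Lemma cantor_dist_some x y n : first_diff x y n -> cantor_dist x y = (/ 2 ^ (S n))%R.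
Proof.
  intros H. unfold cantor_dist.
  destruct (excluded_middle_informative (exists n, first_diff x y n)) as [E|E].
  - destruct (constructive_indefinite_description _ E) as [n' Hn']; simpl.
    rewrite (first_diff_unique _ _ _ _ Hn' H). reflexivity.
  - exfalso; apply E; eauto.
Qed.

Lemma cantor_dist_none x y : ~ (exists n, first_diff x y n) -> cantor_dist x y = 0%R.
Proof.
  intros H. unfold cantor_dist.
  destruct (excluded_middle_informative (exists n, first_diff x y n)) as [E|E]; [contradiction|reflexivity].
Qed.

Lemma cantor_dist_nonneg x y : (0 <= cantor_dist x y)%R.
Proof.
  unfold cantor_dist.
  destruct (excluded_middle_informative _); [|lra].
  left. apply Rinv_0_lt_compat. apply pow_lt. lra.
Qed.

Lemma lip_crit (f : cantor -> cantor) :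
  (forall z z' p, (forall q, q <= p -> z q = z' q) -> f z p = f z' p) -> lipschitz1 f.
Proof.
  intros Hf x y.
  destruct (classic (exists n, first_diff (f x) (f y) n)) as [[n1 Hn1]|Hn].
  - rewrite (cantor_dist_some _ _ _ Hn1).
    assert (exists q, q <= n1 /\ x q <> y q) as Hq.
    { apply NNPP; intros Hc. apply (proj1 Hn1). apply Hf. intros q Hq.
      destruct (Bool.bool_dec (x q) (y q)); auto. exfalso; apply Hc; exists q; auto. }
    destruct (first_diff_exists _ _ _ Hq) as [n0 [Hle Hn0]].
    rewrite (cantor_dist_some _ _ _ Hn0).
    apply Rinv_le_contravar.
    + apply pow_lt; lra.
    + apply Rle_pow; [lra| lia].
  - rewrite (cantor_dist_none _ _ Hn). apply cantor_dist_nonneg.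
Qed.

Record St := mkSt {
  L : nat -> Prop;
  ord : nat -> nat -> Prop;
  ord_irr : forall a, ~ ord a a;
  ord_trans : forall a b c, ord a b -> ord b c -> ord a c;
  ord_total : forall a b, L a -> L b -> a <> b -> ord a b \/ ord b a;
  coinf : forall a, exists b, a <= b /\ ~ L b
}.

Definition below (S : St) (c : option nat) (b : nat) : Prop :=
  match c with None => True | Some c => ord S b c end.

Definition cutok (S : St) (c : option nat) : Prop :=
  match c with None => True | Some c => L S c end.

Definition Rw (y x : St) (c : option nat) (pi : nat -> nat) (n : nat) : Prop :=
  cutok x c /\
  (forall a, L y a -> L x (pi a) /\ below x c (pi a)) /\
  (forall a1 a2, L y a1 -> L y a2 -> pi a1 = pi a2 -> a1 = a2) /\
  (forall b, L x b -> below x c b -> exists a, L y a /\ pi a = b) /\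
  (forall a1 a2, L y a1 -> L y a2 -> (ord y a1 a2 <-> ord x (pi a1) (pi a2))) /\
  (forall a, L y a -> (n <= a \/ n <= pi a) -> pi a = a).

Definition Rel (y x : St) : Prop := exists c pi n, Rw y x c pi n.

Lemma Rel_refl S : Rel S S.
Proof.
  exists None, (fun a => a), 0. split; [|split; [|split; [|split; [|split]]]]; simpl; auto.
  - intros b Hb _. exists b; auto.
  - tauto.
Qed.

Lemma Rel_trans y x w : Rel y x -> Rel x w -> Rel y w.
Proof.
  intros [c1 [p1 [n1 [H1 [H2 [H3 [H4 [H5 H6]]]]]]]] [c2 [p2 [n2 [G1 [G2 [G3 [G4 [G5 G6]]]]]]]].
  exists (match c1 with None => c2 | Some c => Some (p2 c) end), (fun a => p2 (p1 a)), (max n1 n2).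
  split; [|split; [|split; [|split; [|split]]]].
  - destruct c1 as [c|]; simpl; auto. apply G2. exact H1.
  - intros a Ha. split; [apply G2; apply H2; auto|].
    destruct c1 as [c|]; simpl.
    + destruct (H2 a Ha) as [Hx Hb]. simpl in Hb. apply G5; auto.
    + apply G2. apply H2. auto.
  - intros a1 a2 Ha1 Ha2 E. apply H3; auto. apply G3; auto; apply H2; auto.
  - intros b Hb Hbel.
    assert (exists a', L x a' /\ p2 a' = b /\ below x c1 a') as [a' [Ha' [<- Hbel']]].
    { destruct c1 as [c|]; simpl in *.
      - destruct (G4 b Hb) as [a' [Ha' E]].
        + destruct c2 as [c2|]; simpl in *; auto.
          eapply ord_trans; [exact Hbel|]. apply G2. auto.
        + exists a'; repeat split; auto. rewrite <- E in Hbel. apply (proj2 (G5 a' c Ha' H1)); auto.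
      - destruct (G4 b Hb Hbel) as [a' [? ?]]. exists a'; auto. }
    destruct (H4 a' Ha' Hbel') as [a [? ?]]. exists a; split; [auto|congruence].
  - intros a1 a2 Ha1 Ha2. split; intros Ho.
    + apply G5; try apply H2; auto. apply H5; auto.
    + apply H5; auto. apply G5; try apply H2; auto.
  - intros a Ha Hn.
    destruct (H2 a Ha) as [Hx _].
    destruct Hn as [Hn|Hn].
    + rewrite (H6 a Ha) by lia. apply G6; [rewrite <- (H6 a Ha) by lia; auto| lia].
    + rewrite (G6 (p1 a) Hx) in * by lia. apply H6; auto; lia.
Qed.

Definition rho (S : St) (m : nat) : nat :=
  if dec (L S m) then cnt (fun b => L S b /\ ord S b m) m else cnt (L S) m.

Definition enc (S : St) : cantor := fun p =>
  let (m, k) := unpair p in if k <? m then k <? rho S m else dec (L S m).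

Lemma rho_le S m : rho S m <= m.
Proof. unfold rho; destruct (dec _); apply cnt_le. Qed.

Lemma enc_pos S m k : k <= m -> enc S (bpos m k) = if k <? m then k <? rho S m else dec (L S m).
Proof. intros H. unfold enc. rewrite unpair_pos; auto. Qed.

Fixpoint cntb (f : nat -> bool) (n : nat) : nat :=
  match n with 0 => 0 | S n' => cntb f n' + (if f n' then 1 else 0) end.

Lemma cntb_ext f g n : (forall k, k < n -> f k = g k) -> cntb f n = cntb g n.
Proof. induction n; simpl; intros H; auto. rewrite IHn, H; auto. Qed.

Lemma cntb_lt r n : cntb (fun k => k <? r) n = min r n.
Proof.
  induction n; simpl; [lia|]. rewrite IHn.
  destruct (Nat.ltb_spec n r); lia.
Qed.

Definition rk (z : cantor) (m : nat) : nat := cntb (fun k => z (bpos m k)) m.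

Lemma rk_enc S m : rk (enc S) m = rho S m.
Proof.
  unfold rk. rewrite (cntb_ext _ (fun k => k <? rho S m)).
  - rewrite cntb_lt. pose proof (rho_le S m). lia.
  - intros k Hk. rewrite enc_pos by lia. destruct (Nat.ltb_spec k m); auto; lia.
Qed.

Definition memb (z : cantor) (m t : nat) : bool := z (bpos m m) && (rk z m <=? t).

Fixpoint td (N h : nat) (z : cantor) (d : nat) : nat :=
  match d with
  | 0 => h
  | S d' => td N h z d' + (if memb z (S N + d') (td N h z d') then 1 else 0)
  end.

Definition decf (N h H : nat) (z : cantor) : cantor := fun p =>
  let (m, k) := unpair p in
  if m <=? N then bitof H p else
  let t := td N h z (m - S N) in
  if k <? m then z p && (k <? t) else memb z m t.

Lemma rk_dep z z' m : (forall q, q < bpos m m -> z q = z' q) -> rk z m = rk z' m.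
Proof.
  intros H. unfold rk. apply cntb_ext. intros k Hk. apply H. unfold bpos; lia.
Qed.

Lemma memb_dep z z' m t : (forall q, q <= bpos m m -> z q = z' q) -> memb z m t = memb z' m t.
Proof.
  intros H. unfold memb. rewrite (rk_dep z z'); [rewrite H; auto|]. intros; apply H; lia.
Qed.

Lemma td_dep N h z z' d : (forall q, q < tri (S N + d) -> z q = z' q) -> td N h z d = td N h z' d.
Proof.
  induction d; intros H; [reflexivity|].
  cbn [td]. 
  assert (E : tri (S N + S d) = tri (S (S N + d))) by (f_equal; lia).
  assert (Hm : bpos (S N + d) (S N + d) < tri (S (S N + d))) by (apply pos_lt_tri; lia).
  assert (Hmono : tri (S N + d) <= tri (S N + S d)) by (apply tri_mono; lia).
  rewrite IHd.
  - rewrite (memb_dep z z'); auto. intros q Hq. apply H. lia.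
  - intros q Hq. apply H. lia.
Qed.

Lemma decf_lip N h H : lipschitz1 (decf N h H).
Proof.
  apply lip_crit. intros z z' p Hzz. unfold decf.
  destruct (unpair_spec p) as [Hk Hp].
  destruct (unpair p) as [m k]; simpl in *.
  destruct (Nat.leb_spec m N); auto.
  rewrite (td_dep N h z z').
  - destruct (Nat.ltb_spec k m).
    + rewrite Hzz; auto.
    + assert (k = m) by lia. subst k. apply memb_dep. intros q Hq. apply Hzz. lia.
  - intros q Hq. apply Hzz. replace (S N + (m - S N)) with m in Hq by lia. unfold bpos in Hp. lia.
Qed.

Section Block.
Variables (y x : St) (c : option nat) (pi : nat -> nat) (n : nat).
Hypothesis HR : Rw y x c pi n.

Let seg b := L x b /\ below x c b.

Lemma bc_gen (P Q : nat -> Prop) m : n <= m ->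
  (forall a, L y a -> (P a <-> Q (pi a))) ->
  cnt (fun a => L y a /\ P a) m = cnt (fun b => seg b /\ Q b) m.
Proof.
  destruct HR as [H1 [H2 [H3 [H4 [H5 H6]]]]].
  intros Hm HPQ. apply (cnt_bij _ _ pi).
  - intros a Ha [HLa HPa]. split.
    + destruct (Nat.lt_ge_cases (pi a) m); auto.
      rewrite H6 in *; auto; lia.
    + split; [apply H2; auto| apply HPQ; auto].
  - intros a1 a2 _ _ [? _] [? _]. apply H3; auto.
  - intros b Hb [[HLb Hbel] HQ]. destruct (H4 b HLb Hbel) as [a [Ha E]].
    exists a. split; [|split; [split; [auto| apply HPQ; auto; congruence]| auto]].
    destruct (Nat.lt_ge_cases a m); auto.
    rewrite H6 in E; auto; lia.
Qed.

Lemma block m : n <= m -> (match c with Some c0 => c0 < m | None => True end) ->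
  (L y m <-> seg m) /\
  cnt (L y) m = cnt seg m /\
  rho y m = min (rho x m) (cnt (L y) m) /\
  dec (L y m) = dec (L x m) && (rho x m <=? cnt (L y) m).
Proof.
  intros Hm Hc.
  pose proof HR as HR'.
  destruct HR' as [H1 [H2 [H3 [H4 [H5 H6]]]]].
  assert (Hmem : L y m <-> seg m).
  { split.
    - intros Hy. rewrite <- (H6 m Hy) by lia. apply H2; auto.
    - intros [Hx Hb]. destruct (H4 m Hx Hb) as [a [Ha E]].
      rewrite H6 in E; auto; [subst; auto| lia]. }
  assert (Hcnt : cnt (L y) m = cnt seg m).
  { rewrite (cnt_ext (L y) (fun a => L y a /\ True)) by tauto.
    rewrite (bc_gen (fun _ => True) (fun _ => True)) by tauto.
    apply cnt_ext; tauto. }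
  split; [auto|split; [auto|]].
  rewrite Hcnt.
  assert (Hsegx : cnt seg m <= cnt (L x) m) by (apply cnt_mono; unfold seg; tauto).
  destruct (classic (L y m)) as [Hy|Hy].
  - assert (Hs : seg m) by (apply Hmem; auto).
    destruct Hs as [Hx Hb].
    assert (Hpm : pi m = m) by (apply H6; auto; lia).
    assert (Ey : rho y m = cnt (fun b => seg b /\ ord x b m) m).
    { unfold rho. rewrite (proj2 (dec_true _) Hy).
      apply (bc_gen (fun a => ord y a m) (fun b => ord x b m)); auto.
      intros a Ha. rewrite <- Hpm at 2. apply H5; auto. }
    assert (Ex : rho x m = cnt (fun b => seg b /\ ord x b m) m).
    { unfold rho. rewrite (proj2 (dec_true _) Hx). apply cnt_ext.
      intros b _. unfold seg. destruct c as [c0|]; simpl in *; [|tauto].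
      split; [intros [? ?]; repeat split; auto; eapply ord_trans; eauto| tauto]. }
    assert (Hle : rho x m <= cnt seg m) by (rewrite Ex; apply cnt_mono; tauto).
    split.
    + rewrite Ey, <- Ex. lia.
    + rewrite (proj2 (dec_true _) Hy), (proj2 (dec_true _) Hx).
      simpl. symmetry. apply Nat.leb_le. auto.
  - assert (Ey : rho y m = cnt seg m).
    { unfold rho. rewrite (proj2 (dec_false _) Hy). auto. }
    rewrite (proj2 (dec_false _) Hy).
    destruct (classic (L x m)) as [Hx|Hx].
    + destruct c as [c0|]; [|exfalso; apply Hy, Hmem; split; simpl; auto].
      assert (Hnb : ~ ord x m c0) by (intros Ho; apply Hy, Hmem; split; auto).
      assert (Hco : ord x c0 m).
      { destruct (ord_total x m c0 Hx H1) as [?|?]; auto; [lia| contradiction]. }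
      assert (Hst : cnt seg m < rho x m).
      { unfold rho. rewrite (proj2 (dec_true _) Hx).
        apply (cnt_strict _ _ _ c0); auto.
        - intros b _ [? Hb]. simpl in Hb. split; auto. eapply ord_trans; eauto.
        - intros [_ Hb]. simpl in Hb. apply (ord_irr x c0); auto. }
      split; [lia|].
      rewrite (proj2 (dec_true _) Hx). simpl. symmetry. apply Nat.leb_gt. auto.
    + assert (Ex : rho x m = cnt (L x) m) by (unfold rho; rewrite (proj2 (dec_false _) Hx); auto).
      split; [lia|].
      rewrite (proj2 (dec_false _) Hx). auto.
Qed.

End Block.

Lemma decode_correct y x : Rel y x -> exists N h H, enc y = decf N h H (enc x).
Proof.
  intros [c [pi [n HR]]].
  set (N := n + match c with Some c0 => c0 | None => 0 end).
  exists N, (cnt (L y) (S N)), (code (enc y) (tri (S N))).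
  apply functional_extensionality. intros p.
  assert (Htd : forall d, td N (cnt (L y) (S N)) (enc x) d = cnt (L y) (S N + d)).
  { induction d; [rewrite Nat.add_0_r; reflexivity|].
    cbn [td]. rewrite IHd.
    replace (S N + S d) with (S (S N + d)) by lia. cbn [cnt].
    f_equal.
    destruct (block y x c pi n HR (S N + d)) as [_ [_ [_ Hd]]].
    - unfold N; lia.
    - destruct c; unfold N; lia.
    - unfold memb. rewrite rk_enc, enc_pos by lia. rewrite Nat.ltb_irrefl.
      rewrite <- Hd. destruct (dec (L y (S N + d))); auto. }
  unfold decf.
  destruct (unpair_spec p) as [Hk Hp].
  destruct (unpair p) as [m k] eqn:Eu; cbn [fst snd] in Hk, Hp.
  destruct (Nat.leb_spec m N).
  - rewrite code_spec; auto.
    rewrite <- Hp. pose proof (pos_lt_tri m k Hk). pose proof (tri_mono (S m) (S N) ltac:(lia)). cbn [tri] in *. lia.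
  - assert (Et : td N (cnt (L y) (S N)) (enc x) (m - S N) = cnt (L y) m) by (rewrite Htd; f_equal; lia).
    rewrite Et.
    destruct (block y x c pi n HR m) as [_ [_ [Hr Hd]]].
    + unfold N; lia.
    + destruct c; unfold N; lia.
    + rewrite <- Hp. rewrite !enc_pos by auto.
      destruct (Nat.ltb_spec k m).
      * rewrite Hr. destruct (Nat.ltb_spec k (rho x m)), (Nat.ltb_spec k (cnt (L y) m)), (Nat.ltb_spec k (Init.Nat.min (rho x m) (cnt (L y) m))); simpl; auto; lia.
      * assert (k = m) by lia. subst k.
        unfold memb. rewrite rk_enc, enc_pos by lia. rewrite Nat.ltb_irrefl. auto.
Qed.

Definition nextfree (X : St) (a : nat) : nat :=
  proj1_sig (constructive_indefinite_description _ (coinf X a)).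

Lemma nextfree_spec X a : a <= nextfree X a /\ ~ L X (nextfree X a).
Proof. unfold nextfree. destruct (constructive_indefinite_description _ _); simpl; auto. Qed.

Fixpoint freeseq (X : St) (a0 i : nat) : nat :=
  match i with 0 => nextfree X a0 | S i' => nextfree X (S (freeseq X a0 i')) end.

Lemma fs_notL X a0 i : ~ L X (freeseq X a0 i).
Proof. destruct i; simpl; apply nextfree_spec. Qed.

Lemma fs_ge X a0 i : a0 + i <= freeseq X a0 i.
Proof.
  induction i; simpl.
  - pose proof (nextfree_spec X a0). lia.
  - pose proof (nextfree_spec X (S (freeseq X a0 i))). lia.
Qed.

Lemma fs_lt X a0 i j : i < j -> freeseq X a0 i < freeseq X a0 j.
Proof.
  induction 1; simpl.
  - pose proof (nextfree_spec X (S (freeseq X a0 i))). lia.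
  - pose proof (nextfree_spec X (S (freeseq X a0 m))). lia.
Qed.

Lemma fs_inj X a0 i j : freeseq X a0 i = freeseq X a0 j -> i = j.
Proof.
  intros E. destruct (Nat.lt_trichotomy i j) as [H|[H|H]]; auto;
  apply (fs_lt X a0) in H; lia.
Qed.

Section Glue.
Variables (T : nat -> St) (cc : nat -> option nat) (pp : nat -> nat -> nat) (nn : nat -> nat).
Hypothesis HR : forall i, Rw (T i) (T (S i)) (cc i) (pp i) (nn i).

Lemma HR_cut i : cutok (T (S i)) (cc i).
Proof. apply (HR i). Qed.
Lemma HR_map i a : L (T i) a -> L (T (S i)) (pp i a) /\ below (T (S i)) (cc i) (pp i a).
Proof. apply (HR i). Qed.
Lemma HR_inj i a1 a2 : L (T i) a1 -> L (T i) a2 -> pp i a1 = pp i a2 -> a1 = a2.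
Proof. apply (HR i). Qed.
Lemma HR_surj i b : L (T (S i)) b -> below (T (S i)) (cc i) b -> exists a, L (T i) a /\ pp i a = b.
Proof. apply (HR i). Qed.
Lemma HR_ord i a1 a2 : L (T i) a1 -> L (T i) a2 -> (ord (T i) a1 a2 <-> ord (T (S i)) (pp i a1) (pp i a2)).
Proof. apply (HR i). Qed.
Lemma HR_bnd i a : L (T i) a -> (nn i <= a \/ nn i <= pp i a) -> pp i a = a.
Proof. apply (HR i). Qed.

Fixpoint B (j : nat) : nat :=
  match j with 0 => 0 | S j' => B j' + nn j' + freeseq (T j') (B j') (B j') + 1 end.

Lemma B_S j : B j < B (S j) /\ nn j < B (S j) /\ freeseq (T j) (B j) (B j) < B (S j).
Proof. simpl; lia. Qed.

Lemma B_mono j k : j <= k -> B j <= B k.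
Proof. induction 1; auto. pose proof (B_S m); lia. Qed.

Lemma B_ge j : j <= B j.
Proof. induction j; simpl; lia. Qed.

Definition lam (j a : nat) : nat := if a <? B j then freeseq (T j) (B j) a else a.

Definition New (j a : nat) : Prop :=
  match j with 0 => L (T 0) a | S j' => L (T (S j')) a /\ ~ below (T (S j')) (cc j') a end.

Lemma New_L j a : New j a -> L (T j) a.
Proof. destruct j; simpl; tauto. Qed.

Fixpoint iot (j k a : nat) : nat :=
  match k with 0 => a | S k' => if j <=? k' then pp k' (iot j k' a) else a end.

Lemma iot_refl j a : iot j j a = a.
Proof. destruct j; [reflexivity|]. cbn [iot]. replace (S j <=? j) with false; auto. symmetry; apply Nat.leb_gt; lia. Qed.

Lemma iot_S j k a : j <= k -> iot j (S k) a = pp k (iot j k a).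
Proof. intros H; simpl. destruct (Nat.leb_spec j k); auto; lia. Qed.

Lemma iot_L j k a : L (T j) a -> j <= k -> L (T k) (iot j k a).
Proof.
  intros Ha. induction k; intros Hk.
  - assert (j = 0) by lia; subst; auto.
  - destruct (Nat.eq_dec j (S k)) as [->|Hne]; [rewrite iot_refl; auto|].
    rewrite iot_S by lia. apply HR_map. apply IHk; lia.
Qed.

Lemma iot_below j k a : L (T j) a -> j <= k -> below (T (S k)) (cc k) (iot j (S k) a).
Proof.
  intros Ha Hk. rewrite iot_S by auto. apply HR_map. apply iot_L; auto.
Qed.

Lemma iot_inj j k a1 a2 : L (T j) a1 -> L (T j) a2 -> j <= k -> iot j k a1 = iot j k a2 -> a1 = a2.
Proof.
  intros H1 H2. induction k; intros Hk E.
  - assert (j = 0) by lia; subst; auto.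
  - destruct (Nat.eq_dec j (S k)) as [->|Hne]; [rewrite !iot_refl in E; auto|].
    rewrite !iot_S in E by lia. apply IHk; [lia|].
    apply (HR_inj k); auto; apply iot_L; auto; lia.
Qed.

Lemma iot_ord j k a1 a2 : L (T j) a1 -> L (T j) a2 -> j <= k ->
  (ord (T j) a1 a2 <-> ord (T k) (iot j k a1) (iot j k a2)).
Proof.
  intros H1 H2. induction k; intros Hk.
  - assert (j = 0) by lia; subst; simpl; tauto.
  - destruct (Nat.eq_dec j (S k)) as [->|Hne]; [rewrite !iot_refl; tauto|].
    rewrite !iot_S by lia. rewrite IHk by lia.
    apply HR_ord; apply iot_L; auto; lia.
Qed.

Lemma iot_comp j i k a : j <= i -> i <= k -> iot j k a = iot i k (iot j i a).
Proof.
  intros H1. induction k; intros H2.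
  - assert (i = 0) by lia. assert (j = 0) by lia. subst; auto.
  - destruct (Nat.eq_dec i (S k)) as [->|Hne]; [rewrite iot_refl; auto|].
    rewrite !iot_S by lia. rewrite IHk by lia. auto.
Qed.

Lemma iot_small j i k a : L (T j) a -> a < B k -> j <= i -> i <= k -> iot j i a < B k.
Proof.
  intros Ha Hak Hji. induction i; intros Hik.
  - assert (j = 0) by lia; subst; auto.
  - destruct (Nat.eq_dec j (S i)) as [->|Hne]; [rewrite iot_refl; auto|].
    rewrite iot_S by lia.
    assert (Hv := IHi ltac:(lia) ltac:(lia)).
    assert (HL : L (T i) (iot j i a)) by (apply iot_L; auto; lia).
    destruct (Nat.le_gt_cases (nn i) (iot j i a)) as [Hn|Hn].
    + rewrite HR_bnd; auto.
    + destruct (Nat.le_gt_cases (nn i) (pp i (iot j i a))) as [Hn'|Hn'].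
      * rewrite HR_bnd; auto.
      * pose proof (B_S i). pose proof (B_mono (S i) k ltac:(lia)). lia.
Qed.

Lemma iot_pers j i k a : L (T j) a -> B k <= a -> j <= i -> i <= k -> iot j i a = a.
Proof.
  intros Ha Hak Hji. induction i; intros Hik.
  - assert (j = 0) by lia; subst; auto.
  - destruct (Nat.eq_dec j (S i)) as [->|Hne]; [rewrite iot_refl; auto|].
    rewrite iot_S by lia. rewrite IHi by lia.
    apply HR_bnd; [rewrite <- (IHi ltac:(lia) ltac:(lia)); apply iot_L; auto; lia|].
    left. pose proof (B_S i). pose proof (B_mono (S i) k ltac:(lia)). lia.
Qed.

Lemma lam_fresh j a : a < B j -> B j <= lam j a /\ lam j a < B (S j) /\ ~ L (T j) (lam j a).
Proof.
  intros H. unfold lam. destruct (Nat.ltb_spec a (B j)); [|lia].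
  split; [pose proof (fs_ge (T j) (B j) a); lia|].
  split; [|apply fs_notL].
  pose proof (fs_lt (T j) (B j) a (B j) H). pose proof (B_S j). lia.
Qed.

Lemma lam_nf j a : B j <= a -> lam j a = a.
Proof. intros H. unfold lam. destruct (Nat.ltb_spec a (B j)); auto; lia. Qed.

Lemma lam_same_inj j a1 a2 : New j a1 -> New j a2 -> lam j a1 = lam j a2 -> a1 = a2.
Proof.
  intros H1 H2 E. apply New_L in H1, H2.
  destruct (Nat.lt_ge_cases a1 (B j)) as [F1|F1], (Nat.lt_ge_cases a2 (B j)) as [F2|F2].
  - unfold lam in E. destruct (Nat.ltb_spec a1 (B j)), (Nat.ltb_spec a2 (B j)); try lia.
    eapply fs_inj; eauto.
  - rewrite (lam_nf j a2) in E by auto. destruct (lam_fresh j a1 F1) as [_ [_ H]]. rewrite E in H. contradiction.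
  - rewrite (lam_nf j a1) in E by auto. destruct (lam_fresh j a2 F2) as [_ [_ H]]. rewrite <- E in H. contradiction.
  - rewrite !lam_nf in E; auto.
Qed.

Lemma lam_lt_neq j1 j2 a1 a2 : j1 < j2 -> New j1 a1 -> New j2 a2 -> lam j1 a1 <> lam j2 a2.
Proof.
  intros Hj H1 H2 E.
  pose proof (New_L _ _ H1) as L1. pose proof (New_L _ _ H2) as L2.
  assert (HB : B (S j1) <= B j2) by (apply B_mono; lia).
  assert (Hl2 : B j2 <= lam j2 a2).
  { destruct (Nat.lt_ge_cases a2 (B j2)) as [F|F]; [apply lam_fresh; auto| rewrite lam_nf; auto]. }
  destruct (Nat.lt_ge_cases a1 (B j1)) as [F1|F1].
  { destruct (lam_fresh j1 a1 F1) as [_ [? _]]. lia. }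
  rewrite (lam_nf j1 a1 F1) in E.
  assert (Hp : iot j1 j2 a1 = a1) by (apply (iot_pers j1 j2 j2); auto; lia).
  assert (HL : L (T j2) a1) by (rewrite <- Hp; apply iot_L; auto; lia).
  destruct (Nat.lt_ge_cases a2 (B j2)) as [F2|F2].
  - destruct (lam_fresh j2 a2 F2) as [_ [_ H]]. rewrite <- E in H. contradiction.
  - rewrite (lam_nf j2 a2 F2) in E. subst a2.
    destruct j2 as [|j']; [lia|].
    destruct H2 as [_ H2]. apply H2. rewrite <- Hp. apply iot_below; auto; lia.
Qed.

Lemma rep_unique j1 a1 j2 a2 : New j1 a1 -> New j2 a2 -> lam j1 a1 = lam j2 a2 -> j1 = j2 /\ a1 = a2.
Proof.
  intros H1 H2 E.
  destruct (Nat.lt_trichotomy j1 j2) as [Hl|[->|Hl]].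
  - exfalso; eapply lam_lt_neq; eauto.
  - split; auto. eapply lam_same_inj; eauto.
  - exfalso; eapply lam_lt_neq; eauto.
Qed.

Definition LN (l : nat) : Prop := exists j a, New j a /\ lam j a = l.
Definition ordN (l1 l2 : nat) : Prop :=
  exists j1 a1 j2 a2, New j1 a1 /\ New j2 a2 /\ lam j1 a1 = l1 /\ lam j2 a2 = l2 /\
    (j1 < j2 \/ (j1 = j2 /\ ord (T j1) a1 a2)).

Lemma ordN_char j1 a1 j2 a2 : New j1 a1 -> New j2 a2 ->
  (ordN (lam j1 a1) (lam j2 a2) <-> (j1 < j2 \/ (j1 = j2 /\ ord (T j1) a1 a2))).
Proof.
  intros H1 H2. split.
  - intros [i1 [b1 [i2 [b2 [G1 [G2 [E1 [E2 Ho]]]]]]]].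
    destruct (rep_unique _ _ _ _ G1 H1 E1) as [-> ->].
    destruct (rep_unique _ _ _ _ G2 H2 E2) as [-> ->]. auto.
  - intros Ho. exists j1, a1, j2, a2. auto.
Qed.

Lemma ordN_irr l : ~ ordN l l.
Proof.
  intros [j1 [a1 [j2 [a2 [G1 [G2 [E1 [E2 Ho]]]]]]]].
  rewrite <- E2 in E1. destruct (rep_unique _ _ _ _ G1 G2 E1) as [-> ->].
  destruct Ho as [?|[_ Ho]]; [lia| apply (ord_irr _ _ Ho)].
Qed.

Lemma ordN_trans l1 l2 l3 : ordN l1 l2 -> ordN l2 l3 -> ordN l1 l3.
Proof.
  intros [j1 [a1 [j2 [a2 [G1 [G2 [E1 [E2 Ho]]]]]]]] [i2 [b2 [j3 [a3 [F2 [G3 [E2' [E3 Ho']]]]]]]].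
  rewrite <- E2' in E2. destruct (rep_unique _ _ _ _ G2 F2 E2) as [<- <-].
  exists j1, a1, j3, a3. repeat split; auto.
  destruct Ho as [?|[<- ?]], Ho' as [?|[<- ?]]; try (left; lia).
  right. split; auto. eapply ord_trans; eauto.
Qed.

Lemma ordN_total l1 l2 : LN l1 -> LN l2 -> l1 <> l2 -> ordN l1 l2 \/ ordN l2 l1.
Proof.
  intros [j1 [a1 [H1 <-]]] [j2 [a2 [H2 <-]]] Hne.
  rewrite !ordN_char by auto.
  destruct (Nat.lt_trichotomy j1 j2) as [Hl|[<-|Hl]]; auto.
  destruct (Nat.eq_dec a1 a2) as [<-|Hna]; [contradiction|].
  destruct (ord_total (T j1) a1 a2 (New_L _ _ H1) (New_L _ _ H2) Hna); auto.
Qed.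

Lemma LN_coinf a : exists b, a <= b /\ ~ LN b.
Proof.
  exists (freeseq (T a) (B a) (B a)). split.
  - pose proof (fs_ge (T a) (B a) (B a)). pose proof (B_ge a). lia.
  - intros [j [a' [Hn E]]].
    set (r := freeseq (T a) (B a) (B a)) in *.
    assert (Hr1 : B a <= r) by (pose proof (fs_ge (T a) (B a) (B a)); unfold r; lia).
    assert (Hr2 : r < B (S a)) by apply B_S.
    pose proof (New_L _ _ Hn) as HL.
    destruct (Nat.lt_trichotomy j a) as [Hl|[->|Hl]].
    + destruct (Nat.lt_ge_cases a' (B j)) as [F|F].
      * destruct (lam_fresh j a' F) as [_ [? _]]. pose proof (B_mono (S j) a ltac:(lia)). lia.
      * rewrite lam_nf in E by auto. subst a'.
        assert (iot j a r = r) by (apply (iot_pers j a a); auto; lia).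
        apply (fs_notL (T a) (B a) (B a)). fold r. rewrite <- H. apply iot_L; auto; lia.
    + destruct (Nat.lt_ge_cases a' (B a)) as [F|F].
      * unfold lam in E. destruct (Nat.ltb_spec a' (B a)); [|lia].
        apply fs_inj in E. lia.
      * rewrite lam_nf in E by auto. subst a'. apply (fs_notL (T a) (B a) (B a)). auto.
    + assert (B j <= lam j a').
      { destruct (Nat.lt_ge_cases a' (B j)) as [F|F]; [apply lam_fresh; auto| rewrite lam_nf; auto]. }
      pose proof (B_mono (S a) j ltac:(lia)). lia.
Qed.

Definition Nst : St := mkSt LN ordN ordN_irr ordN_trans ordN_total LN_coinf.

Lemma rep_exists k b : L (T k) b -> exists j a, j <= k /\ New j a /\ iot j k a = b.
Proof.
  revert b. induction k; intros b Hb.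
  - exists 0, b. split; auto.
  - destruct (classic (below (T (S k)) (cc k) b)) as [Hbel|Hbel].
    + destruct (HR_surj k b Hb Hbel) as [a [Ha <-]].
      destruct (IHk a Ha) as [j [a' [Hj [Hn <-]]]].
      exists j, a'. split; [lia|]. split; auto. rewrite iot_S; auto.
    + exists (S k), b. split; auto. split; [split; auto| apply iot_refl].
Qed.

Lemma ord_lt_case k j1 a1 j2 a2 : j1 < j2 -> j2 <= k -> New j1 a1 -> New j2 a2 ->
  ord (T k) (iot j1 k a1) (iot j2 k a2).
Proof.
  intros Hl Hk H1 H2.
  pose proof (New_L _ _ H1) as L1. pose proof (New_L _ _ H2) as L2.
  destruct j2 as [|j']; [lia|].
  assert (Hv : below (T (S j')) (cc j') (iot j1 (S j') a1)) by (apply iot_below; auto; lia).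
  assert (HvL : L (T (S j')) (iot j1 (S j') a1)) by (apply iot_L; auto; lia).
  assert (Hord : ord (T (S j')) (iot j1 (S j') a1) a2).
  { destruct H2 as [_ Hn2].
    pose proof (HR_cut j') as Hc.
    destruct (cc j') as [c|]; simpl in *; [|exfalso; apply Hn2; auto].
    destruct (Nat.eq_dec a2 c) as [->|Hne]; auto.
    destruct (ord_total _ a2 c L2 Hc Hne) as [?|?]; [contradiction|].
    eapply ord_trans; eauto. }
  rewrite (iot_comp j1 (S j') k) by lia.
  apply iot_ord; auto.
Qed.

Lemma rep_unique_iot k j1 a1 j2 a2 : j1 <= k -> j2 <= k -> New j1 a1 -> New j2 a2 ->
  iot j1 k a1 = iot j2 k a2 -> j1 = j2 /\ a1 = a2.
Proof.
  intros Hk1 Hk2 H1 H2 E.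
  destruct (Nat.lt_trichotomy j1 j2) as [Hl|[<-|Hl]].
  - exfalso. pose proof (ord_lt_case k j1 a1 j2 a2 Hl Hk2 H1 H2) as Ho.
    rewrite E in Ho. apply (ord_irr _ _ Ho).
  - split; auto. eapply iot_inj; eauto; apply New_L; auto.
  - exfalso. pose proof (ord_lt_case k j2 a2 j1 a1 Hl Hk1 H2 H1) as Ho.
    rewrite E in Ho. apply (ord_irr _ _ Ho).
Qed.

Lemma ord_rep k j1 a1 j2 a2 : j1 <= k -> j2 <= k -> New j1 a1 -> New j2 a2 ->
  (ord (T k) (iot j1 k a1) (iot j2 k a2) <-> (j1 < j2 \/ (j1 = j2 /\ ord (T j1) a1 a2))).
Proof.
  intros Hk1 Hk2 H1 H2.
  destruct (Nat.lt_trichotomy j1 j2) as [Hl|[<-|Hl]].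
  - split; auto. intros _. apply ord_lt_case; auto.
  - rewrite <- iot_ord; try apply New_L; auto. split; auto. intros [?|[_ ?]]; auto; lia.
  - split; [|intros [?|[? _]]; lia].
    intros Ho. exfalso. pose proof (ord_lt_case k j2 a2 j1 a1 Hl Hk1 H2 H1).
    apply (ord_irr (T k) (iot j1 k a1)). eapply ord_trans; eauto.
Qed.

Definition sig (k b : nat) : nat :=
  match excluded_middle_informative
    (exists q : nat * nat, fst q <= k /\ New (fst q) (snd q) /\ iot (fst q) k (snd q) = b) with
  | left H => let q := proj1_sig (constructive_indefinite_description _ H) in lam (fst q) (snd q)
  | right _ => b
  end.

Lemma sig_spec k b : L (T k) b -> exists j a, j <= k /\ New j a /\ iot j k a = b /\ sig k b = lam j a.
Proof.
  intros Hb. unfold sig.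
  destruct (excluded_middle_informative _) as [H|H].
  - destruct (constructive_indefinite_description _ H) as [[j a] [? [? ?]]]; simpl in *.
    exists j, a. auto.
  - exfalso. destruct (rep_exists k b Hb) as [j [a [? [? ?]]]]. apply H. exists (j, a). auto.
Qed.

Lemma Rk k cut : cutok (Nst) cut ->
  (forall l, LN l -> (below Nst cut l <-> exists j a, j <= k /\ New j a /\ lam j a = l)) ->
  Rel (T k) Nst.
Proof.
  intros Hcut Hseg. exists cut, (sig k), (B (S k)).
  split; [auto|]. split; [|split; [|split; [|split]]].
  - intros b Hb. destruct (sig_spec k b Hb) as [j [a [Hj [Hn [Ei Es]]]]].
    rewrite Es. assert (HL : LN (lam j a)) by (exists j, a; auto).
    split; auto. apply Hseg; auto. exists j, a; auto.
  - intros b1 b2 Hb1 Hb2 E.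
    destruct (sig_spec k b1 Hb1) as [j1 [a1 [Hj1 [Hn1 [Ei1 Es1]]]]].
    destruct (sig_spec k b2 Hb2) as [j2 [a2 [Hj2 [Hn2 [Ei2 Es2]]]]].
    rewrite Es1, Es2 in E. destruct (rep_unique _ _ _ _ Hn1 Hn2 E) as [<- <-]. congruence.
  - intros l Hl Hbel. destruct (proj1 (Hseg l Hl) Hbel) as [j [a [Hj [Hn <-]]]].
    exists (iot j k a). split; [apply iot_L; auto; apply New_L; auto|].
    destruct (sig_spec k (iot j k a)) as [j' [a' [Hj' [Hn' [Ei Es]]]]]; [apply iot_L; auto; apply New_L; auto|].
    destruct (rep_unique_iot k j' a' j a Hj' Hj Hn' Hn Ei) as [-> ->]. auto.
  - intros b1 b2 Hb1 Hb2.
    destruct (sig_spec k b1 Hb1) as [j1 [a1 [Hj1 [Hn1 [Ei1 Es1]]]]].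
    destruct (sig_spec k b2 Hb2) as [j2 [a2 [Hj2 [Hn2 [Ei2 Es2]]]]].
    simpl. rewrite Es1, Es2, ordN_char by auto. subst b1 b2. apply ord_rep; auto.
  - intros b Hb Hbnd.
    destruct (sig_spec k b Hb) as [j [a [Hj [Hn [Ei Es]]]]].
    pose proof (New_L _ _ Hn) as HL.
    pose proof (B_mono (S j) (S k) ltac:(lia)).
    pose proof (B_mono j k Hj). pose proof (B_S k).
    destruct (Nat.lt_ge_cases a (B j)) as [F|F].
    + exfalso. destruct (lam_fresh j a F) as [_ [? _]].
      assert (iot j k a < B k) by (apply iot_small; auto; lia). lia.
    + rewrite Es, lam_nf by auto.
      destruct (Nat.lt_ge_cases a (B k)) as [F'|F'].
      * exfalso. assert (iot j k a < B k) by (apply iot_small; auto; lia). rewrite Es, lam_nf in Hbnd by auto. lia.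
      * rewrite <- Ei. symmetry. apply (iot_pers j k k); auto.
Qed.

Lemma chain_rel k d : Rel (T k) (T (k + d)).
Proof.
  induction d; [rewrite Nat.add_0_r; apply Rel_refl|].
  eapply Rel_trans; [exact IHd|]. rewrite Nat.add_succ_r. exists (cc (k + d)), (pp (k + d)), (nn (k + d)). apply HR.
Qed.

Lemma glue_main k : Rel (T k) Nst.
Proof.
  destruct (classic (exists j c, k <= j /\ cc j = Some c)) as [[j [c [Hkj Hc]]]|Hno].
  - pose proof (chain_rel k (j - k)) as Hch. replace (k + (j - k)) with j in Hch by lia.
    eapply Rel_trans; [exact Hch|].
    assert (HcL : L (T (S j)) c) by (pose proof (HR_cut j) as H; rewrite Hc in H; exact H).
    assert (HnC : New (S j) c) by (simpl; rewrite Hc; simpl; split; auto; apply ord_irr).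
    apply (Rk j (Some (lam (S j) c))).
    + simpl. exists (S j), c. auto.
    + intros l [j' [a' [Hn' <-]]]. simpl. rewrite ordN_char by auto.
      split.
      * intros [Hl|[-> Ho]]; [exists j', a'; split; auto; lia|].
        exfalso. destruct Hn' as [_ Hn']. rewrite Hc in Hn'. contradiction.
      * intros [j'' [a'' [Hj'' [Hn'' E]]]]. destruct (rep_unique _ _ _ _ Hn'' Hn' E) as [-> ->]. left; lia.
  - apply (Rk k None); [simpl; auto|].
    intros l [j' [a' [Hn' <-]]]. simpl. split; auto. intros _.
    exists j', a'. split; auto.
    destruct (Nat.le_gt_cases j' k) as [?|Hg]; auto.
    exfalso. destruct j' as [|j'']; [lia|].
    destruct Hn' as [_ Hn']. apply Hn'.
    destruct (cc j'') as [c|] eqn:E; simpl; auto.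
    exfalso. apply Hno. exists j'', c. split; auto; lia.
Qed.

End Glue.

Section Top.
Variables (Y : St) (w : nat -> bool).

Definition ff (i : nat) : nat := freeseq Y 0 i.
Definition newz (l : nat) : Prop := l = ff 0 \/ exists j, w j = true /\ l = ff (2 * j + 2).
Definition Lz (l : nat) : Prop := L Y l \/ newz l.
Definition ordz (a b : nat) : Prop :=
  (L Y a /\ L Y b /\ ord Y a b) \/ (L Y a /\ newz b) \/ (newz a /\ newz b /\ a < b).

Lemma newz_notL l : newz l -> ~ L Y l.
Proof. intros [->|[j [_ ->]]]; apply fs_notL. Qed.

Lemma ordz_irr a : ~ ordz a a.
Proof.
  intros [[_ [_ H]]|[[H1 H2]|[_ [_ H]]]]; [apply (ord_irr _ _ H)| apply (newz_notL _ H2 H1)| lia].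
Qed.

Lemma ordz_trans a b c : ordz a b -> ordz b c -> ordz a c.
Proof.
  intros H1 H2.
  destruct H1 as [[Ha [Hb Hab]]|[[Ha Hb]|[Ha [Hb Hab]]]];
  destruct H2 as [[Hb' [Hc Hbc]]|[[Hb' Hc]|[Hb' [Hc Hbc]]]];
  try (match goal with H1 : newz ?x, H2 : L Y ?x |- _ => exfalso; exact (newz_notL _ H1 H2) end).
  - left. repeat split; auto. eapply ord_trans; eauto.
  - right; left; auto.
  - right; left; auto.
  - right; right; repeat split; auto; lia.
Qed.

Lemma ordz_total a b : Lz a -> Lz b -> a <> b -> ordz a b \/ ordz b a.
Proof.
  intros [Ha|Ha] [Hb|Hb] Hne.
  - destruct (ord_total Y a b Ha Hb Hne); [left|right]; left; auto.
  - left; right; left; auto.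
  - right; right; left; auto.
  - destruct (Nat.lt_trichotomy a b) as [?|[?|?]]; [left|contradiction|right]; right; right; auto.
Qed.

Lemma Lz_coinf a : exists b, a <= b /\ ~ Lz b.
Proof.
  exists (ff (2 * a + 1)). split.
  - pose proof (fs_ge Y 0 (2 * a + 1)). unfold ff. lia.
  - intros [H|[H|[j [_ H]]]].
    + apply (fs_notL Y 0 (2 * a + 1)); auto.
    + apply fs_inj in H. lia.
    + apply fs_inj in H. lia.
Qed.

Definition Zst : St := mkSt Lz ordz ordz_irr ordz_trans ordz_total Lz_coinf.

Lemma ff_lt i j : i < j -> ff i < ff j.
Proof. apply fs_lt. Qed.

Lemma top_rel : Rel Y Zst.
Proof.
  exists (Some (ff 0)), (fun a => a), 0.
  split; [simpl; right; left; auto|].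
  split; [|split; [|split; [|split]]]; simpl.
  - intros a Ha. split; [left; auto|]. right; left; split; auto. left; auto.
  - auto.
  - intros b Hb Ho. exists b. split; auto.
    destruct Ho as [[? _]|[[? _]|[[Hb'|[j [_ Hb']]] [_ Hlt]]]]; auto.
    + lia.
    + exfalso. pose proof (ff_lt 0 (2 * j + 2) ltac:(lia)). lia.
  - intros a1 a2 H1 H2. split; [intros; left; auto|].
    intros [[_ [_ ?]]|[[_ Hn]|[Hn _]]]; auto; exfalso; eapply newz_notL; eauto.
  - auto.
Qed.

Lemma top_bit j : enc Zst (bpos (ff (2 * j + 2)) (ff (2 * j + 2))) = w j.
Proof.
  rewrite enc_pos by lia. rewrite Nat.ltb_irrefl.
  destruct (w j) eqn:E.
  - apply dec_true. simpl. right; right. exists j; auto.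
  - apply dec_false. simpl. intros [H|[H|[j' [E' H]]]].
    + apply (fs_notL Y 0 (2 * j + 2)); auto.
    + apply fs_inj in H. lia.
    + apply fs_inj in H. assert (j = j') by lia. subst; congruence.
Qed.

End Top.

Fixpoint Tc (h : nat -> St) (k : nat) : St :=
  match k with
  | 0 => h 0
  | S k' => if dec (Rel (Tc h k') (h (S k'))) then h (S k') else Tc h k'
  end.

Lemma Tc_is (h : nat -> St) k : exists j, Tc h k = h j.
Proof.
  induction k; simpl; [exists 0; auto|].
  destruct (dec (Rel (Tc h k) (h (S k)))); [exists (S k); auto| auto].
Qed.

Lemma ext_lemma (h : nat -> St) : (forall i j, Rel (h i) (h j) \/ Rel (h j) (h i)) ->
  exists z, (forall i, Rel (h i) z) /\ (forall i, enc z <> enc (h i)).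
Proof.
  intros Hcmp.
  assert (Hch : forall k, Rel (Tc h k) (Tc h (S k))).
  { intros k. simpl. destruct (dec (Rel (Tc h k) (h (S k)))) eqn:E.
    - apply (proj1 (dec_true _)) in E; auto.
    - apply Rel_refl. }
  assert (Hh : forall k, Rel (h k) (Tc h k)).
  { intros [|k]; simpl; [apply Rel_refl|].
    destruct (dec (Rel (Tc h k) (h (S k)))) eqn:E; [apply Rel_refl|].
    apply (proj1 (dec_false _)) in E.
    destruct (Tc_is h k) as [j Ej]. rewrite Ej in *.
    destruct (Hcmp (S k) j) as [?|?]; auto. contradiction. }
  assert (Hw : forall i, {q : option nat * (nat -> nat) * nat |
     Rw (Tc h i) (Tc h (S i)) (fst (fst q)) (snd (fst q)) (snd q)}).
  { intros i. apply constructive_indefinite_description.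
    destruct (Hch i) as [c [p [n Hr]]]. exists (c, p, n). auto. }
  set (cc := fun i => fst (fst (proj1_sig (Hw i)))).
  set (pp := fun i => snd (fst (proj1_sig (Hw i)))).
  set (nn := fun i => snd (proj1_sig (Hw i))).
  assert (HR : forall i, Rw (Tc h i) (Tc h (S i)) (cc i) (pp i) (nn i)).
  { intros i. unfold cc, pp, nn. destruct (Hw i) as [q Hq]. simpl. auto. }
  set (Y := Nst (Tc h) cc pp nn HR).
  set (w := fun j => negb (enc (h j) (bpos (ff Y (2 * j + 2)) (ff Y (2 * j + 2))))).
  exists (Zst Y w). split.
  - intros i. eapply Rel_trans; [apply Hh|].
    eapply Rel_trans; [apply (glue_main (Tc h) cc pp nn HR)|].
    apply top_rel.
  - intros i E. pose proof (top_bit Y w i) as Hb. rewrite E in Hb.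
    unfold w in Hb. destruct (enc (h i) _); discriminate.
Qed.

Definition Good (A : St -> Prop) : Prop :=
  (forall y x, A y -> A x -> Rel y x \/ Rel x y) /\
  (forall y x, A y -> A x -> enc y = enc x -> y = x).

Definition cond (A : St -> Prop) (z : St) : Prop :=
  (forall y, A y -> Rel y z) /\ (forall y, A y -> enc y <> enc z).

Definition next (A : St -> Prop) : St -> Prop :=
  match excluded_middle_informative (exists z, cond A z) with
  | left H => let z := proj1_sig (constructive_indefinite_description _ H) in fun s => A s \/ s = z
  | right _ => A
  end.

Inductive Tw : (St -> Prop) -> Prop :=
| tw_next : forall A, Tw A -> Tw (next A)
| tw_union : forall (Fm : (St -> Prop) -> Prop), (forall A, Fm A -> Tw A) -> Tw (fun s => exists A, Fm A /\ A s).

Definition sub (A B : St -> Prop) : Prop := forall s, A s -> B s.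

Lemma sub_ext A B : sub A B -> sub B A -> A = B.
Proof.
  intros H1 H2. apply functional_extensionality. intros s. apply propositional_extensionality. split; auto.
Qed.

Lemma next_sup A : sub A (next A).
Proof. intros s Hs. unfold next. destruct (excluded_middle_informative _); auto. Qed.

Definition extreme (C : St -> Prop) : Prop := forall A, Tw A -> sub A C -> sub C A \/ sub (next A) C.

Lemma tw_L1 C : extreme C -> forall A, Tw A -> sub A C \/ sub (next C) A.
Proof.
  intros HC A HA. induction HA as [A HA IH|Fm HFm IH].
  - destruct IH as [Hs|Hs].
    + destruct (HC A HA Hs) as [Hs'|Hs'].
      * right. rewrite (sub_ext A C Hs Hs'). intros s; auto.
      * left; auto.
    + right. intros s Hs0. apply next_sup. auto.
  - destruct (classic (forall A, Fm A -> sub A C)) as [Hall|Hnot].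
    + left. intros s [A [HA Hs]]. eapply Hall; eauto.
    + right. apply not_all_ex_not in Hnot as [A HA].
      apply imply_to_and in HA as [HA HnA].
      destruct (IH A HA) as [?|Hs]; [contradiction|].
      intros s Hs0. exists A. auto.
Qed.

Lemma tw_L2 C : Tw C -> extreme C.
Proof.
  induction 1 as [C HC IH|Fm HFm IH].
  - intros A HA Hsub.
    destruct (tw_L1 C IH A HA) as [Hs|Hs].
    + destruct (IH A HA Hs) as [Hs'|Hs'].
      * right. rewrite (sub_ext A C Hs Hs'). intros s; auto.
      * right. intros s Hs0. apply next_sup. auto.
    + left; auto.
  - intros A HA Hsub.
    destruct (classic (forall D, Fm D -> sub (next D) A)) as [Hall|Hnot].
    + left. intros s [D [HD Hs]]. apply (Hall D HD). apply next_sup; auto.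
    + apply not_all_ex_not in Hnot as [D HD].
      apply imply_to_and in HD as [HD HnD].
      destruct (tw_L1 D (IH D HD) A HA) as [HAD|?]; [|contradiction].
      destruct (IH D HD A HA HAD) as [HDA|HnA].
      * assert (A = D) by (apply sub_ext; auto). subst D.
        destruct (classic (forall D', Fm D' -> sub D' A)) as [Hall'|Hnot'].
        -- left. intros s [D' [HD' Hs]]. eapply Hall'; eauto.
        -- right. apply not_all_ex_not in Hnot' as [D' HD'].
           apply imply_to_and in HD' as [HD' HnD'].
           destruct (tw_L1 A (IH A HD) D' (HFm D' HD')) as [?|Hs]; [contradiction|].
           intros s Hs0. exists D'. auto.
      * right. intros s Hs0. exists D. auto.
Qed.

Lemma tw_chain A C : Tw A -> Tw C -> sub A C \/ sub C A.
Proof.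
  intros HA HC. destruct (tw_L1 C (tw_L2 C HC) A HA) as [?|Hs]; auto.
  right. intros s Hs0. apply Hs. apply next_sup. auto.
Qed.

Lemma tw_good A : Tw A -> Good A.
Proof.
  induction 1 as [A HA IH|Fm HFm IH].
  - unfold next. destruct (excluded_middle_informative _) as [H|H]; auto.
    destruct (constructive_indefinite_description _ H) as [z [Hz1 Hz2]]. simpl.
    destruct IH as [G1 G2]. split.
    + intros y x [Hy| ->] [Hx| ->]; [auto| left; apply Hz1; auto| right; apply Hz1; auto| left; apply Rel_refl].
    + intros y x [Hy| ->] [Hx| ->] E; [auto| exfalso; apply (Hz2 y Hy); auto| exfalso; apply (Hz2 x Hx); auto| auto].
  - split.
    + intros y x [A1 [H1 Hy]] [A2 [H2 Hx]].
      destruct (tw_chain A1 A2 (HFm _ H1) (HFm _ H2)) as [Hs|Hs].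
      * apply (IH A2 H2); auto.
      * apply (IH A1 H1); auto.
    + intros y x [A1 [H1 Hy]] [A2 [H2 Hx]].
      destruct (tw_chain A1 A2 (HFm _ H1) (HFm _ H2)) as [Hs|Hs].
      * apply (IH A2 H2); auto.
      * apply (IH A1 H1); auto.
Qed.

Definition emptySt : St :=
  mkSt (fun _ => False) (fun _ _ => False) (fun a H => H) (fun a b c H _ => H)
    (fun a b H _ _ => False_ind _ H) (fun a => ex_intro _ a (conj (le_n a) (fun H => H))).

Definition UU : St -> Prop := fun s => exists A, Tw A /\ A s.

Lemma UU_tw : Tw UU.
Proof. apply (tw_union Tw). auto. Qed.

Lemma UU_max z : ~ cond UU z.
Proof.
  intros Hc.
  assert (Hs : sub (next UU) UU).
  { intros s Hs. exists (next UU). split; auto. apply tw_next, UU_tw. }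
  unfold next in Hs. destruct (excluded_middle_informative _) as [H|H]; [|apply H; eauto].
  destruct (constructive_indefinite_description _ H) as [z' [Hz1 Hz2]]. simpl in Hs.
  apply (Hz2 z'); auto.
Qed.

Definition FF (i : nat) : cantor -> cantor :=
  let (N, r) := pr i in let (h, H) := pr r in decf N h H.

Theorem theorem3p1 :
  exists (F : nat -> cantor -> cantor) (X : cantor -> Prop),
    (forall n, lipschitz1 (F n)) /\
    ~ countable_set X /\
    covered_by F (fun x y => X x /\ X y).
Proof.
  exists FF, (fun x => exists s, UU s /\ enc s = x).
  pose proof (tw_good UU UU_tw) as [G1 G2].
  split; [|split].
  - intros n. unfold FF. destruct (pr n) as [N r]. destruct (pr r) as [h H]. apply decf_lip.
  - intros [g Hg].
    destruct (classic (exists s0, UU s0)) as [[s0 Hs0]|Hno].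
    + set (hh := fun n => match excluded_middle_informative (exists s, UU s /\ enc s = g n) with
                         | left H => proj1_sig (constructive_indefinite_description _ H)
                         | right _ => s0 end).
      assert (Hhh : forall n, UU (hh n)).
      { intros n. unfold hh. destruct (excluded_middle_informative _) as [H|H]; auto.
        destruct (constructive_indefinite_description _ H) as [s [? ?]]; auto. }
      destruct (ext_lemma hh) as [z [Hz1 Hz2]].
      { intros i j. apply G1; auto. }
      apply (UU_max z). split.
      * intros y Hy. destruct (Hg (enc y)) as [n Hn]; [exists y; auto|].
        assert (E : hh n = y).
        { unfold hh. destruct (excluded_middle_informative _) as [H|H].
          - destruct (constructive_indefinite_description _ H) as [s [Hs Es]]; simpl.
            apply G2; auto. congruence.
          - exfalso; apply H. exists y; auto. }
        rewrite <- E. auto.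
      * intros y Hy. destruct (Hg (enc y)) as [n Hn]; [exists y; auto|].
        assert (E : hh n = y).
        { unfold hh. destruct (excluded_middle_informative _) as [H|H].
          - destruct (constructive_indefinite_description _ H) as [s [Hs Es]]; simpl.
            apply G2; auto. congruence.
          - exfalso; apply H. exists y; auto. }
        rewrite <- E. intros E'. apply (Hz2 n). auto.
    + apply (UU_max emptySt). split; intros y Hy; exfalso; apply Hno; eauto.
  - intros x y [[s [Hs <-]] [s' [Hs' <-]]].
    destruct (G1 s s' Hs Hs') as [Hr|Hr].
    + destruct (decode_correct s s' Hr) as [N [h [H E]]].
      destruct (pr_surj h H) as [r Er]. destruct (pr_surj N r) as [i Ei].
      exists i. right. unfold FF. rewrite Ei, Er. auto.
    + destruct (decode_correct s' s Hr) as [N [h [H E]]].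
      destruct (pr_surj h H) as [r Er]. destruct (pr_surj N r) as [i Ei].
      exists i. left. unfold FF. rewrite Ei, Er. auto.
Qed.
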